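(* Let $\mathbb{F}$ be a field and let $n,k$ be integers with $1<k<n$. Call an integer $l$ realizable if there is a unital $\mathbb{F}$-algebra $\mathcal{A}$ with $\dim\mathcal{A}=n$ and $l(\mathcal{A})=l$. Then: (1) the interval $[2^{n-k-1},2^{n-k}-1]$ contains at least $1+\binom{n-k-1}{1}+\cdots+\binom{n-k-1}{\min(k-1,\,n-k-1)}$ realizable integers; (2) if $k>\lceil n/2\rceil$, then every integer in $[2^{n-k-1},2^{n-k}-1]$ is realizable; (3) if $k=2$, then the interval $[2^{n-k-1},2^{n-k}-1]$ contains exactly $1+\binom{n-3}{1}=n-2$ realizable integers.
   Context: All algebras are finite-dimensional, unital, not necessarily associative algebras over the field $\mathbb{F}$. For a finite generating set $S$ of an algebra $\mathcal{A}$, a word in $S$ is any product (with any bracketing) of finitely many elements of $S$; its length is the number of factors, and $1$ is a word of length $0$. $L_i(S)$ is the linear span of all words in $S$ of length at most $i$. The length of $S$ is $l(S)=\min\{k\ge0: L_k(S)=\mathcal{A}\}$, and $l(\mathcal{A})=\max\{l(S): S\text{ a finite generating set of }\mathcal{A}\}$. *)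

(* Defs.v *)
From HB Require Import structures.
From mathcomp Require Import all_boot all_order all_algebra.
Set Implicit Arguments. Unset Strict Implicit. Unset Printing Implicit Defensive.
Import Order.TTheory GRing.Theory Num.Theory.
Local Open Scope ring_scope.

(* An n-dimensional (not necessarily associative) F-algebra is modelled, up to
   isomorphism, as the vector space F^n = 'rV[F]_n together with a bilinear
   multiplication [mul] and a two-sided unit [e]. *)

Section AlgDefs.
Variables (F : fieldType) (n : nat).
Local Notation V := 'rV[F]_n.

Definition bilinear_mul (mul : V -> V -> V) : Prop :=
  (forall (a : F) (x y z : V), mul (a *: x + y) z = a *: mul x z + mul y z) /\
  (forall (a : F) (x y z : V), mul z (a *: x + y) = a *: mul z x + mul z y).

Definition is_unit_elt (mul : V -> V -> V) (e : V) : Prop :=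
  forall x : V, mul e x = x /\ mul x e = x.

Inductive is_word (mul : V -> V -> V) (S : seq V) : nat -> V -> Prop :=
  | word_gen s : s \in S -> is_word mul S 1 s
  | word_mul a b x y : is_word mul S a x -> is_word mul S b y ->
      is_word mul S (a + b) (mul x y).

Definition L_full (mul : V -> V -> V) (e : V) (S : seq V) (k : nat) : Prop :=
  exists ws : seq V,
    (forall w, w \in ws -> w = e \/ exists m, (1 <= m <= k)%N /\ is_word mul S m w)
    /\ <<ws>>%VS = fullv.

Definition set_length (mul : V -> V -> V) (e : V) (S : seq V) (l : nat) : Prop :=
  L_full mul e S l /\ forall k, L_full mul e S k -> (l <= k)%N.

Definition alg_length (mul : V -> V -> V) (e : V) (l : nat) : Prop :=
  (exists S, set_length mul e S l) /\
  forall S l', set_length mul e S l' -> (l' <= l)%N.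

End AlgDefs.

Definition realizable (F : fieldType) (n l : nat) : Prop :=
  exists (mul : 'rV[F]_n -> 'rV[F]_n -> 'rV[F]_n) (e : 'rV[F]_n),
    bilinear_mul mul /\ is_unit_elt mul e /\ alg_length mul e l.

(* Main.v *)
Require Import Defs.
From HB Require Import structures.
From mathcomp Require Import all_boot all_order all_algebra.
From mathcomp Require Import zify.
From Stdlib Require Import Classical.
Set Implicit Arguments. Unset Strict Implicit. Unset Printing Implicit Defensive.

Module M_Comb.

Lemma e2le x y : x <= y -> 2^x <= 2^y.
Proof. by rewrite leq_exp2l. Qed.
Lemma e2lt x y : x < y -> 2 * 2^x <= 2^y.
Proof. by move=> h; rewrite -expnS leq_exp2l. Qed.
Lemma e2le_inv x y : 2^x <= 2^y -> x <= y.
Proof. by rewrite leq_exp2l. Qed.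
Lemma e2lt_inv x y : 2^x < 2^y -> x < y.
Proof. by rewrite ltn_exp2l. Qed.
Lemma e2pos x : 0 < 2^x. Proof. by rewrite expn_gt0. Qed.
Lemma e2S x : 2^x.+1 = 2 * 2^x. Proof. by rewrite expnS. Qed.

Section Comb.
Variable jump : nat -> bool.
Variable ix : nat -> nat.
Hypothesis J0 : forall m, jump m -> 0 < m.
Hypothesis J1 : forall m, jump m -> 1 < m ->
  exists a b, [/\ jump a, jump b & a + b = m].
Hypothesis J2 : forall a m, jump a -> jump m -> a < m -> ix a < ix m.

Lemma chainP m : jump m -> m <= 2^(ix m).
Proof.
elim/ltn_ind: m => m IH jm.
have [m1|m2] := leqP m 1.
  by have := e2pos (ix m); lia.
have [a [b [ja jb ab]]] := J1 jm m2.
have a0 := J0 ja; have b0 := J0 jb.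
have ha := IH a ltac:(lia) ja; have hb := IH b ltac:(lia) jb.
have := e2lt (J2 ja jm ltac:(lia)); have := e2lt (J2 jb jm ltac:(lia)).
lia.
Qed.

Lemma chainPow x : jump x -> x = 2^(ix x) ->
  forall y, jump y -> y <= x -> y = 2^(ix y).
Proof.
elim/ltn_ind: x => x IH jx hx y jy yx.
have [->|ylt] := eqVneq y x; first by [].
have [x1|x2] := leqP x 1.
  have := J0 jy; lia.
have [a [b [ja jb ab]]] := J1 jx x2.
have a0 := J0 ja; have b0 := J0 jb.
have ha := chainP ja; have hb := chainP jb.
have ia := J2 ja jx ltac:(lia); have ib := J2 jb jx ltac:(lia).
have Ia := e2lt ia; have Ib := e2lt ib.
have eqa : a = 2^(ix a).
  have : 2^(ix x) <= 2 * 2^(ix a) by lia.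
  rewrite -e2S => /e2le_inv h.
  have : ix a = (ix x).-1 by lia.
  move=> h'; rewrite h'; have : 2^(ix x) = 2 * 2^(ix x).-1 by rewrite -e2S; congr (expn 2 _); lia.
  lia.
have ya : y <= a.
  rewrite leqNgt; apply/negP => ay.
  have := J2 ja jy ay; have := J2 jy jx ltac:(lia).
  have : 2^(ix x) <= 2 * 2^(ix a) by lia.
  rewrite -e2S => /e2le_inv; lia.
exact: IH a ltac:(lia) ja eqa y jy ya.
Qed.

Lemma chainQ m : jump m -> 2^(ix m) <= 2 * m ->
  [\/ m = 2^(ix m), 2 * m = 2^(ix m) |
      exists t, [/\ 0 < t, t < ix m & 2 * m = 2^(ix m) + 2 ^ t]].
Proof.
elim/ltn_ind: m => m IH jm hm.
have [m1|m2] := leqP m 1.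
  have := J0 jm => m0; have m1' : m = 1 by lia.
  have := e2pos (ix m) => p0.
  have [h|h] : 2^(ix m) = 1 \/ 2^(ix m) = 2 by lia.
    by apply: Or31; lia.
  by apply: Or32; lia.
have [a0 [b0 [ja0 jb0 ab0]]] := J1 jm m2.
have [a [b [ja jb ab ba]]] : exists a b, [/\ jump a, jump b, a + b = m & b <= a].
  have [le|lt] := leqP b0 a0; first by exists a0, b0.
  by exists b0, a0; split => //; lia.
have a0' := J0 ja; have b0' := J0 jb.
have ha := chainP ja; have hb := chainP jb.
have ia := J2 ja jm ltac:(lia); have ib := J2 jb jm ltac:(lia).
have Ia := e2lt ia; have Ib := e2lt ib.
have [small|big] := ltnP (ix a).+1 (ix m).
  have : 2 * 2^(ix a) <= 2^(ix m).-1.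
    by rewrite -e2S; apply: e2le; lia.
  have : 2^(ix m) = 2 * 2^(ix m).-1 by rewrite -e2S; congr (expn 2 _); lia.
  move=> h1 h2; apply: Or32; lia.
have iaE : ix a = (ix m).-1 by lia.
have IE : 2^(ix m) = 2 * 2^(ix a) by rewrite iaE -e2S; congr (expn 2 _); lia.
have QA : 2^(ix a) <= 2 * a by lia.
have [QA1|QA2|[t [t0 tlt tE]]] := IH a ltac:(lia) ja QA.
-
  have beq := chainPow ja QA1 jb ba.
  have [bla|bea] := ltnP b a.
    have := J2 jb ja bla => ibia.
    apply: Or33; exists (ix b).+1; split => //; first by lia.
    by rewrite e2S; lia.
  have bea' : b = a by lia.
  apply: Or31; lia.
-
  have [bla|bea] := ltnP b a.
    exfalso; lia.
  apply: Or32; lia.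
-
  have [bla|bea] := ltnP b a; last first.
    apply: Or33; exists t.+1; split => //; first by lia.
    rewrite e2S; lia.
  have ibia := J2 jb ja bla.
  have ia1 : 0 < ix a by lia.
  have Ea : 2^(ix a) = 2 * 2^(ix a).-1 by rewrite -e2S; congr (expn 2 _); lia.
  have tle : t <= (ix a).-1 by lia.
  have Et := e2le tle.
  have [ibs|ibb] := ltnP (ix b).+1 (ix a).
    have Hb : 2 * 2^(ix b) <= 2^(ix a).-1 by rewrite -e2S; apply: e2le; lia.
    have : 2^(ix a).-1 <= 2 ^ t by lia.
    move/e2le_inv => tge.
    have tE2 : t = (ix a).-1 by lia.
    apply: Or32; lia.
  have ibE : ix b = (ix a).-1 by lia.
  have QB : 2^(ix b) <= 2 * b.
    rewrite ibE.
    have [tt|tt] := ltnP t (ix a).-1.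
      have : 2 * 2 ^ t <= 2^(ix a).-1 by apply: e2lt.
      lia.
    have : t = (ix a).-1 by lia.
    lia.
  have [QB1|QB2|[u [u0 ult uE]]] := IH b ltac:(lia) jb QB.
  + apply: Or33; exists t; split => //; first by lia.
    rewrite ibE in QB1; lia.
  +
    rewrite ibE in QB2.
    have : 2^(ix a).-1 <= 2 ^ t by lia.
    move/e2le_inv => tge.
    have tE' : t = (ix a).-1 by lia.
    rewrite tE' in tE.
    apply: Or32; lia.
  + rewrite ibE in uE ult.
    have [tt|tt] := ltnP t (ix a).-1.
      have Ht : 2 * 2 ^ t <= 2^(ix a).-1 by apply: e2lt.
      have Hu : 2 * 2 ^ u <= 2^(ix a).-1 by apply: e2lt.
      have ia2 : 1 < ix a by lia.
      have Ea2 : 2^(ix a).-1 = 2 * 2^(ix a).-2 by rewrite -e2S; congr (expn 2 _); lia.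
      have Ht' : 2 ^ t <= 2^(ix a).-2 by lia.
      have Hu' : 2 ^ u <= 2^(ix a).-2 by lia.
      apply: Or32; lia.
    have tE' : t = (ix a).-1 by lia.
    rewrite tE' in tE.
    apply: Or33; exists u; split => //; first by lia.
    lia.
Qed.

End Comb.

End M_Comb.
Import M_Comb.

Module M_Gen.
Import Order.TTheory GRing.Theory Num.Theory.
Local Open Scope ring_scope.

Section SpanInd.
Variables (F : fieldType) (vT : vectType F).
Lemma span_ind (P : vT -> Prop) (gs : seq vT) :
  P 0 -> (forall a u v, P u -> P v -> P (a *: u + v)) ->
  (forall g, g \in gs -> P g) -> forall v, v \in <<gs>>%VS -> P v.
Proof.
move=> P0 Pc; elim: gs => [|g gs IH] Pg v.
  by rewrite span_nil memv0 => /eqP ->.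
rewrite span_cons => /memv_addP [u /vlineP [k ->] [w hw ->]].
apply: Pc; first by apply: Pg; rewrite mem_head.
by apply: IH => // h hh; apply: Pg; rewrite in_cons hh orbT.
Qed.
End SpanInd.

Section Gen.
Variables (F : fieldType) (n : nat).
Local Notation V := 'rV[F]_n.
Variables (mul : V -> V -> V) (e : V).
Hypothesis hbil : bilinear_mul mul.
Hypothesis hunit : is_unit_elt mul e.

Lemma mul0l z : mul 0 z = 0.
Proof.
have := (hbil.1 1 0 0 z); rewrite !scale1r !addr0 => h.
by apply: (addrI (mul 0 z)); rewrite addr0 -h.
Qed.
Lemma mul0r z : mul z 0 = 0.
Proof.
have := (hbil.2 1 0 0 z); rewrite !scale1r !addr0 => h.
by apply: (addrI (mul z 0)); rewrite addr0 -h.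
Qed.
Lemma mulDZl a x y z : mul (a *: x + y) z = a *: mul x z + mul y z.
Proof. exact: hbil.1. Qed.
Lemma mulDZr a x y z : mul z (a *: x + y) = a *: mul z x + mul z y.
Proof. exact: hbil.2. Qed.
Lemma mulDl x y z : mul (x + y) z = mul x z + mul y z.
Proof. by have := hbil.1 1 x y z; rewrite !scale1r. Qed.
Lemma mulDr x y z : mul z (x + y) = mul z x + mul z y.
Proof. by have := hbil.2 1 x y z; rewrite !scale1r. Qed.
Lemma mulZl a x z : mul (a *: x) z = a *: mul x z.
Proof. by have := hbil.1 a x 0 z; rewrite addr0 mul0l addr0. Qed.
Lemma mulZr a x z : mul z (a *: x) = a *: mul z x.
Proof. by have := hbil.2 a x 0 z; rewrite addr0 mul0r addr0. Qed.
Lemma mulNl x z : mul (- x) z = - mul x z.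
Proof. by rewrite -scaleN1r mulZl scaleN1r. Qed.
Lemma mulNr x z : mul z (- x) = - mul z x.
Proof. by rewrite -scaleN1r mulZr scaleN1r. Qed.
Lemma mulBl x y z : mul (x - y) z = mul x z - mul y z.
Proof. by rewrite mulDl mulNl. Qed.
Lemma mulBr x y z : mul z (x - y) = mul z x - mul z y.
Proof. by rewrite mulDr mulNr. Qed.

Variable S : seq V.

Fixpoint wl (m : nat) : seq (seq V) :=
  if m is m'.+1 then
    rcons (wl m') (if m' is 0 then S else
      flatten [seq [seq mul x y | x <- nth [::] (wl m') a,
                                  y <- nth [::] (wl m') (m'.+1 - a)] | a <- iota 1 m'])
  else [:: [::]].

Lemma size_wl m : size (wl m) = m.+1.
Proof. by elim: m => //= m IH; rewrite size_rcons IH. Qed.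

Definition words j := nth [::] (wl j) j.

Lemma wl_prefix m j : (j <= m)%N -> nth [::] (wl m) j = words j.
Proof.
elim: m => [|m IH]; first by rewrite leqn0 => /eqP ->.
rewrite leq_eqVlt => /orP [/eqP ->|]; first by [].
rewrite ltnS => hj.
have -> : wl m.+1 = rcons (wl m) (if m is 0 then S else
      flatten [seq [seq mul x y | x <- nth [::] (wl m) a,
                                  y <- nth [::] (wl m) (m.+1 - a)] | a <- iota 1 m]) by [].
rewrite nth_rcons size_wl ltnS hj; exact: IH.
Qed.

Lemma words0 : words 0 = [::]. Proof. by []. Qed.
Lemma words1 : words 1 = S. Proof. by []. Qed.
Lemma wordsS m : (0 < m)%N -> words m.+1 =
  flatten [seq [seq mul x y | x <- words a, y <- words (m.+1 - a)] | a <- iota 1 m].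
Proof.
case: m => // m _.
rewrite {1}/words.
have -> : wl m.+2 = rcons (wl m.+1) (flatten [seq [seq mul x y | x <- nth [::] (wl m.+1) a,
                                  y <- nth [::] (wl m.+1) (m.+2 - a)] | a <- iota 1 m.+1]) by [].
rewrite nth_rcons size_wl ltnn eqxx.
congr flatten; apply/eq_in_map => a; rewrite mem_iota => /andP [a1 a2].
rewrite !wl_prefix //; lia.
Qed.

Lemma is_word_pos j w : is_word mul S j w -> (0 < j)%N.
Proof. by elim => // a b x y _ ha _ hb; rewrite addn_gt0 ha. Qed.

Lemma is_word_inv j w : is_word mul S j w ->
  (j = 1%N /\ w \in S) \/
  exists a b x y, [/\ is_word mul S a x, is_word mul S b y, j = (a + b)%N & w = mul x y].
Proof.
case => [s hs|a b x y hx hy]; first by left.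
by right; exists a, b, x, y.
Qed.

Lemma wordsP j w : reflect (is_word mul S j w) (w \in words j).
Proof.
apply: (iffP idP).
  elim/ltn_ind: j w => j IH w.
  case: j IH => [|[|m]] IH; first by rewrite words0.
    by rewrite words1 => hw; constructor.
  rewrite wordsS // => /flatten_mapP [a]; rewrite mem_iota => /andP [a1 a2].
  case/allpairsP => [[x y] /= [hx hy ->]].
  have := word_mul (IH a ltac:(lia) x hx) (IH (m.+2 - a)%N ltac:(lia) y hy).
  by have -> : (a + (m.+2 - a) = m.+2)%N by lia.
elim => [s hs|a b x y hx ihx hy ihy]; first by rewrite words1.
have a0 := is_word_pos hx; have b0 := is_word_pos hy.
have -> : (a + b = (a + b).-1.+1)%N by lia.
rewrite wordsS; last by lia.
apply/flatten_mapP; exists a; first by rewrite mem_iota; lia.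
have -> : ((a + b).-1.+1 - a = b)%N by lia.
exact: allpairs_f.
Qed.

Definition gens m := e :: flatten [seq words j | j <- iota 1 m].
Definition Lv m := <<gens m>>%VS.

Lemma gensP m g : g \in gens m <->
  (g = e \/ exists j, (1 <= j <= m)%N /\ is_word mul S j g).
Proof.
rewrite /gens in_cons; split.
  case/orP => [/eqP ->|/flatten_mapP [j]]; first by left.
  rewrite mem_iota => hj /wordsP hw; right; exists j; split => //; lia.
case => [->|[j [hj hw]]]; first by rewrite eqxx.
apply/orP; right; apply/flatten_mapP; exists j; last exact/wordsP.
rewrite mem_iota; lia.
Qed.

Lemma Lv_fullP m : L_full mul e S m <-> Lv m = fullv.
Proof.
split.
  move=> [ws [hws hsp]]; apply/eqP; rewrite eqEsubv subvf /= -hsp.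
  apply/span_subvP => w /hws hw; apply: memv_span; exact/gensP.
by move=> h; exists (gens m); split => // w /gensP.
Qed.

Lemma memLv_e m : e \in Lv m.
Proof. by apply: memv_span; rewrite mem_head. Qed.
Lemma memLv_word m j w : is_word mul S j w -> (j <= m)%N -> w \in Lv m.
Proof.
move=> hw hj; apply: memv_span; apply/gensP; right; exists j; split => //.
by rewrite hj (is_word_pos hw).
Qed.

Lemma Lv_mono a b : (a <= b)%N -> (Lv a <= Lv b)%VS.
Proof.
move=> ab; apply/span_subvP => g /gensP [->|[j [hj hw]]]; first exact: memLv_e.
apply: memLv_word hw _; lia.
Qed.

Lemma Lv_mul a b u v : u \in Lv a -> v \in Lv b -> mul u v \in Lv (a + b).
Proof.
move=> hu hv.
apply: (@span_ind _ _ (fun u => mul u v \in Lv (a + b)) (gens a)) u hu.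
- by rewrite mul0l mem0v.
- by move=> c x y hx hy; rewrite mulDZl memvD ?memvZ.
move=> g /gensP hg.
apply: (@span_ind _ _ (fun v => mul g v \in Lv (a + b)) (gens b)) hv.
- by rewrite mul0r mem0v.
- by move=> c x y hx hy; rewrite mulDZr memvD ?memvZ.
move=> h /gensP hh.
case: hg => [->|[j [hj hw]]].
  rewrite (hunit h).1; case: hh => [->|[j' [hj' hw']]]; first exact: memLv_e.
  apply: memLv_word hw' _; lia.
case: hh => [->|[j' [hj' hw']]].
  rewrite (hunit g).2; apply: memLv_word hw _; lia.
apply: memLv_word (word_mul hw hw') _; lia.
Qed.

Definition jumpL m := (0 < m)%N && (Lv m.-1 != Lv m).

Lemma jumpL_dec m : jumpL m -> (1 < m)%N ->
  exists a b, [/\ jumpL a, jumpL b & (a + b)%N = m].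
Proof.
move=> /andP [m0 hm] m1.
apply: NNPP => hn; move/negP: hm; apply; apply/eqP.
apply/eqP; rewrite eqEsubv Lv_mono ?leq_pred //=.
apply/span_subvP => g /gensP [->|[j [hj hw]]]; first exact: memLv_e.
have [jm|jm] := ltnP j m.
  apply: memLv_word hw _; lia.
have jE : j = m by lia.
rewrite jE in hw.
have H := is_word_inv hw.
case: H => [H1|H2]. 
  exfalso; case: H1 => m1' _; lia.
case: H2 => a [b [x [y [hx hy mab gE]]]].
rewrite gE.
have a0 := is_word_pos hx; have b0 := is_word_pos hy.
have [ja|ja] := boolP (Lv a.-1 != Lv a); last first.
  move: ja; rewrite negbK => /eqP ja.
  have hx' : x \in Lv a.-1 by rewrite ja; apply: memLv_word hx _.
  have := Lv_mul hx' (memLv_word hy (leqnn b)).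
  by have -> : (a.-1 + b = m.-1)%N by lia.
have [jb|jb] := boolP (Lv b.-1 != Lv b); last first.
  move: jb; rewrite negbK => /eqP jb.
  have hy' : y \in Lv b.-1 by rewrite jb; apply: memLv_word hy _.
  have := Lv_mul (memLv_word hx (leqnn a)) hy'.
  by have -> : (a + b.-1 = m.-1)%N by lia.
exfalso; apply: hn; exists a, b; split => //; apply/andP; split => //; lia.
Qed.

End Gen.

End M_Gen.
Import M_Gen.

Module M_Up.
Import Order.TTheory GRing.Theory Num.Theory.

Section Up.
Variables (F : fieldType) (n : nat).
Local Notation V := 'rV[F]_n.
Variables (mul : V -> V -> V) (e : V).
Hypothesis hbil : bilinear_mul mul.
Hypothesis hunit : is_unit_elt mul e.
Hypothesis n0 : (0 < n)%N.
Variable S : seq V.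

Lemma e_neq0 : e != 0%R.
Proof.
apply/negP => /eqP e0.
have := (hunit (delta_mx ord0 (Ordinal n0))).1.
rewrite e0 mul0l // => /rowP /(_ (Ordinal n0)).
by rewrite !mxE !eqxx /= => /eqP; rewrite eq_sym oner_eq0.
Qed.

Let D m := \dim (Lv mul e S m).

Lemma D_ge1 m : (1 <= D m)%N.
Proof.
have : (<[e]> <= Lv mul e S m)%VS by rewrite -span_seq1; apply/span_subvP => x;
  rewrite inE => /eqP ->; apply: memLv_e.
by move/dimvS; rewrite dim_vline e_neq0.
Qed.

Lemma jumpD m : jumpL mul e S m -> (D m.-1 < D m)%N.
Proof.
case/andP => m0 hne.
have sub : (Lv mul e S m.-1 <= Lv mul e S m)%VS by apply: Lv_mono; lia.
move: hne; rewrite eqEdim sub /= -ltnNge; exact.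
Qed.

Lemma jumpJ2 a m : jumpL mul e S a -> jumpL mul e S m -> (a < m)%N ->
  ((D a).-2 < (D m).-2)%N.
Proof.
move=> ja jm am.
have h1 := jumpD ja; have h2 := jumpD jm.
have h3 : (D a <= D m.-1)%N by apply: dimvS; apply: Lv_mono; lia.
have := D_ge1 a.-1; lia.
Qed.

Lemma upper_len l : set_length mul e S l -> (0 < l)%N ->
  (l <= 2 ^ (n - 2))%N /\
  ((2 ^ (n - 2) <= 2 * l)%N ->
  [\/ l = 2 ^ (n - 2), (2 * l = 2 ^ (n - 2))%N |
      exists t, [/\ (0 < t)%N, (t < n - 2)%N & (2 * l = 2 ^ (n - 2) + 2 ^ t)%N]]).
Proof.
move=> [hf hmin] l0.
have jl : jumpL mul e S l.
  apply/andP; split => //.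
  apply/eqP => h.
  have : L_full mul e S l.-1 by apply/Lv_fullP; rewrite h; apply/Lv_fullP.
  move/hmin; lia.
have Dl : D l = n.
  by rewrite /D (proj1 (Lv_fullP _ _ _ _) hf) dimvf /dim /= mul1n.
have ixl : (D l).-2 = (n - 2)%N by rewrite Dl; lia.
have J0 : forall m, jumpL mul e S m -> (0 < m)%N by move=> m /andP [].
have J1 := @jumpL_dec _ _ mul e hbil hunit S.
have := chainP J0 J1 jumpJ2 jl; rewrite ixl => hP.
split => // hq.
have := chainQ J0 J1 jumpJ2 jl; rewrite ixl; exact.
Qed.

End Up.

End M_Up.
Import M_Up.

Module M_WAlg.
Import Order.TTheory GRing.Theory Num.Theory.

Section WAlg.
Variables (F : fieldType) (n' : nat).
Local Notation n := n'.+1.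
Local Notation V := 'rV[F]_n.
Variables (wt : nat -> nat) (isprod : nat -> bool) (fl gl : nat -> nat).
Hypothesis W0 : wt 0 = 0.
Hypothesis Wpos : forall t, 0 < t < n -> 0 < wt t.
Hypothesis Wgen : forall t, 0 < t < n -> ~~ isprod t -> wt t = 1.
Hypothesis Wprod : forall t, 0 < t < n -> isprod t ->
  [/\ 0 < fl t < n, 0 < gl t < n & wt t = wt (fl t) + wt (gl t)].
Hypothesis Winj : forall t t', 0 < t < n -> 0 < t' < n -> isprod t -> isprod t' ->
  fl t = fl t' -> gl t = gl t' -> t = t'.
Variable W : nat.
Hypothesis Wmax : forall t, t < n -> wt t <= W.
Variable top : nat.
Hypothesis topn : top < n.
Hypothesis topW : wt top = W.

Definition tab (i j : 'I_n) : option 'I_n :=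
  if i == ord0 then Some j else if j == ord0 then Some i else
  [pick t : 'I_n | (0 < t) && isprod t && (fl t == i) && (gl t == j)].
Definition tv (o : option 'I_n) : V := if o is Some t then ('e_t)%R else 0%R.
Definition mulW (x y : V) : V :=
  (\sum_(i < n) \sum_(j < n) (x ord0 i * y ord0 j) *: tv (tab i j))%R.
Definition eW : V := ('e_ord0)%R.

Lemma tabW i j t : tab i j = Some t -> wt t = wt i + wt j.
Proof.
rewrite /tab; case: (eqVneq i ord0) => [-> [<-]|i0]; first by rewrite W0.
case: (eqVneq j ord0) => [-> [<-]|j0]; first by rewrite W0 addn0.
case: pickP => // t' /andP[/andP[/andP[t0 pt] /eqP fi] /eqP gj] [<-].
have tn : 0 < t' < n by rewrite t0 ltn_ord.
by case: (Wprod tn pt) => _ _ ->; rewrite fi gj.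
Qed.

Lemma ecoord (p i : 'I_n) : (('e_p)%R : V) ord0 i = ((i == p)%:R)%R.
Proof. by rewrite mxE eqxx. Qed.

Lemma mulW_coord x y k : (mulW x y) ord0 k =
  (\sum_(i < n) \sum_(j < n) x ord0 i * y ord0 j * (tv (tab i j)) ord0 k)%R.
Proof.
rewrite /mulW summxE; apply: eq_bigr => i _; rewrite summxE.
by apply: eq_bigr => j _; rewrite mxE.
Qed.

Lemma tv_coord o k : (tv o) ord0 k != 0%R -> o = Some k.
Proof.
case: o => [t|] /=; last by rewrite mxE eqxx.
by rewrite ecoord; case: (eqVneq k t) => [-> //|kt]; rewrite eqxx.
Qed.

Lemma bilW : bilinear_mul mulW.
Proof.
split => a x y z.
  rewrite /mulW GRing.scaler_sumr -big_split; apply: eq_bigr => i _ /=.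
  rewrite GRing.scaler_sumr -big_split; apply: eq_bigr => j _ /=.
  by rewrite !mxE GRing.mulrDl GRing.scalerDl GRing.scalerA GRing.mulrA.
rewrite /mulW GRing.scaler_sumr -big_split; apply: eq_bigr => i _ /=.
rewrite GRing.scaler_sumr -big_split; apply: eq_bigr => j _ /=.
rewrite !mxE GRing.mulrDr GRing.scalerDl GRing.scalerA.
by rewrite GRing.mulrCA.
Qed.

Lemma sum_delta (p : 'I_n) (G : 'I_n -> F) :
  (\sum_(i < n) ((i == p)%:R * G i) = G p)%R.
Proof.
rewrite (bigD1 p) //= eqxx GRing.mul1r big1 ?GRing.addr0 // => i ip.
by rewrite (negbTE ip) GRing.mul0r.
Qed.

Lemma sum2_l (p : 'I_n) (y : V) (G : 'I_n -> 'I_n -> F) :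
  (\sum_(i < n) \sum_(j < n) ((('e_p)%R : V) ord0 i * y ord0 j * G i j) = \sum_(j < n) y ord0 j * G p j)%R.
Proof.
rewrite -(sum_delta p (fun i => \sum_(j < n) y ord0 j * G i j)%R).
apply: eq_bigr => i _; rewrite GRing.mulr_sumr; apply: eq_bigr => j _.
by rewrite ecoord GRing.mulrA.
Qed.

Lemma sum2_r (q : 'I_n) (x : V) (G : 'I_n -> 'I_n -> F) :
  (\sum_(i < n) \sum_(j < n) (x ord0 i * (('e_q)%R : V) ord0 j * G i j) = \sum_(i < n) x ord0 i * G i q)%R.
Proof.
apply: eq_bigr => i _.
rewrite -(sum_delta q (fun j => x ord0 i * G i j)%R).
apply: eq_bigr => j _; rewrite ecoord.
by rewrite [RHS]GRing.mulrC GRing.mulrAC.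
Qed.

Lemma sum_coord (x : V) k : (\sum_(j < n) x ord0 j * (('e_j)%R : V) ord0 k = x ord0 k)%R.
Proof.
rewrite {2}[x]row_sum_delta summxE; apply: eq_bigr => j _.
by rewrite !mxE.
Qed.

Lemma unitW : is_unit_elt mulW eW.
Proof.
move=> x; split; apply/rowP => k; rewrite mulW_coord.
  rewrite sum2_l -[RHS](sum_coord x k); apply: eq_bigr => j _.
  by rewrite /tab eqxx.
rewrite sum2_r -[RHS](sum_coord x k); apply: eq_bigr => i _.
by rewrite /tab; case: (eqVneq i ord0) => [->|]; rewrite ?eqxx.
Qed.

Lemma mulW_e (p q : 'I_n) : mulW ('e_p)%R ('e_q)%R = tv (tab p q).
Proof.
apply/rowP => k; rewrite mulW_coord sum2_l.
rewrite -(sum_delta q (fun j => (tv (tab p j)) ord0 k)).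
by apply: eq_bigr => j _; rewrite ecoord.
Qed.

Definition fin w (v : V) := forall i : 'I_n, wt i < w -> v ord0 i = 0%R.
Definition low k (v : V) := forall i : 'I_n, k < wt i -> v ord0 i = 0%R.
Definition hom w (v : V) := forall i : 'I_n, wt i != w -> v ord0 i = 0%R.

Lemma fin_mul a b x y : fin a x -> fin b y -> fin (a + b) (mulW x y).
Proof.
move=> hx hy k hk; rewrite mulW_coord; apply: big1 => i _; apply: big1 => j _.
case: (eqVneq ((tv (tab i j)) ord0 k) 0%R) => [->|/tv_coord /tabW wk].
  by rewrite GRing.mulr0.
have [ia|ia] := ltnP (wt i) a; first by rewrite hx // !GRing.mul0r.
have [jb|jb] := ltnP (wt j) b; first by rewrite (hy j jb) GRing.mulr0 GRing.mul0r.
exfalso; lia.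
Qed.

Lemma hom_mul a b x y : hom a x -> hom b y -> hom (a + b) (mulW x y).
Proof.
move=> hx hy k hk; rewrite mulW_coord; apply: big1 => i _; apply: big1 => j _.
case: (eqVneq ((tv (tab i j)) ord0 k) 0%R) => [->|/tv_coord /tabW wk].
  by rewrite GRing.mulr0.
case: (eqVneq (wt i) a) => [ia|ia]; last by rewrite hx // !GRing.mul0r.
case: (eqVneq (wt j) b) => [jb|jb]; last by rewrite (hy j jb) GRing.mulr0 GRing.mul0r.
by move: hk; rewrite wk ia jb eqxx.
Qed.

Lemma wt_ord0 (i : 'I_n) : wt i < 1 -> i = ord0.
Proof.
move=> h; apply/val_inj => /=; case: (posnP i) => // i0.
have := Wpos (t:=i) ltac:(rewrite i0 ltn_ord); lia.
Qed.

Definition Fv w : {vspace V} := <<[seq ('e_i)%R | i : 'I_n <- enum 'I_n & (w <= wt i)%N]>>%VS.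

Lemma FvP w v : reflect (fin w v) (v \in Fv w).
Proof.
apply: (iffP idP).
  apply: (@span_ind _ _ (fin w)).
  - by move=> i _; rewrite mxE.
  - by move=> a u u' hu hu' i hi; rewrite !mxE hu // hu' // GRing.mulr0 GRing.addr0.
  move=> g /mapP [i]; rewrite mem_filter => /andP [hi _] -> j hj.
  rewrite ecoord; case: eqP => // ji; rewrite ji in hj; lia.
move=> hv; rewrite [v]row_sum_delta; apply: memv_suml => i _.
have [hi|hi] := ltnP (wt i) w; first by rewrite hv // GRing.scale0r mem0v.
by apply: memvZ; apply: memv_span; apply: map_f; rewrite mem_filter hi mem_enum.
Qed.

Lemma Fv_mono a b : a <= b -> (Fv b <= Fv a)%VS.
Proof.
move=> ab; apply/subvP => v /FvP hv; apply/FvP => i hi; apply: hv; lia.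
Qed.

Lemma Fv_mul a b x y : x \in Fv a -> y \in Fv b -> mulW x y \in Fv (a + b).
Proof. by move=> /FvP hx /FvP hy; apply/FvP; apply: fin_mul. Qed.

Lemma Fv_e (p : 'I_n) : ('e_p)%R \in Fv (wt p).
Proof. apply/FvP => i hi; rewrite ecoord; case: eqP => // ip; rewrite ip in hi; lia. Qed.

Local Notation LvS S m := (Lv mulW eW S m).

Section AnyS.
Variable S : seq V.
Let S' := [seq s - (s ord0 ord0) *: eW | s : V <- S]%R.

Lemma S'_fin : (<<S'>> <= Fv 1)%VS.
Proof.
apply/span_subvP => g /mapP [s hs ->]; apply/FvP => i /wt_ord0 ->.
by rewrite !mxE eqxx GRing.mulr1 GRing.subrr.
Qed.

Lemma S'_L : (<<S'>> <= LvS S 1)%VS.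
Proof.
apply/span_subvP => g /mapP [s hs ->]; apply: memvB; last first.
  by apply: memvZ; apply: memLv_e.
by apply: (@memLv_word _ _ mulW eW _ _ 1) => //; constructor.
Qed.

Let T : {vspace V} := (<[eW]> + (<<S'>> + Fv 2))%VS.

Lemma T_word j w : is_word mulW S j w -> w \in T.
Proof.
elim => [s hs|a b x y hx ihx hy ihy].
  have -> : s = ((s ord0 ord0) *: eW + (s - (s ord0 ord0) *: eW))%R by rewrite GRing.addrC GRing.subrK.
  apply: memvD; first by apply: memvZ; apply: (subvP (addvSl _ _)); exact: memv_line.
  apply: (subvP (addvSr _ _)); apply: (subvP (addvSl _ _)).
  by apply: memv_span; apply: map_f.
move: ihx ihy => /memv_addP [x1 /vlineP [bx ->] [g1 hg1 ->]] /memv_addP [y1 /vlineP [by_ ->] [g2 hg2 ->]].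
have hg1' : g1 \in Fv 1.
  move: hg1 => /memv_addP [u hu [f hf ->]]; apply: memvD; first exact: (subvP S'_fin).
  exact: (subvP (Fv_mono (isT : 1 <= 2))).
have hg2' : g2 \in Fv 1.
  move: hg2 => /memv_addP [u hu [f hf ->]]; apply: memvD; first exact: (subvP S'_fin).
  exact: (subvP (Fv_mono (isT : 1 <= 2))).
have Hb := bilW; have Hu := unitW.
rewrite (mulDl Hb) !(mulDr Hb) !(mulZl Hb) !(mulZr Hb) (Hu eW).1 (Hu g2).1 (Hu g1).2.
rewrite GRing.addrA; apply: memvD; last first.
  apply: (subvP (addvSr _ _)); apply: (subvP (addvSr _ _)).
  exact: (Fv_mul hg1' hg2').
apply: memvD; last by apply: memvZ; apply: (subvP (addvSr _ _)).
by apply: memvD; apply: memvZ; [apply: memvZ; apply: (subvP (addvSl _ _)); exact: memv_line|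
  apply: (subvP (addvSr _ _))].
Qed.

Lemma T_L m : (LvS S m <= T)%VS.
Proof.
apply/span_subvP => g /gensP [->|[j [_ hw]]]; last exact: T_word hw.
by apply: (subvP (addvSl _ _)); exact: memv_line.
Qed.

Hypothesis Sgen : exists m, L_full mulW eW S m.

Definition good (c : 'I_n) := exists u, [/\ u \in LvS S (wt c), u \in Fv (wt c) &
  (u - ('e_c)%R)%R \in Fv (wt c).+1].

Lemma good1 (c : 'I_n) : 0 < c -> wt c = 1 -> good c.
Proof.
move=> c0 wc1.
have [m /Lv_fullP hm] := Sgen.
have : (('e_c)%R : V) \in T by apply: (subvP (T_L m)); rewrite hm memvf.
move=> /memv_addP [x1 /vlineP [b ->] [g /memv_addP [u hu [f hf ->]] he]].
have hf' := hf; move/FvP: hf' => hf'.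
have hu' : u \in Fv 1 by apply: (subvP S'_fin).
move/FvP: (hu') => hu''.
have b0 : b = 0%R.
  move/rowP: he => /(_ ord0); rewrite !mxE !eqxx.
  rewrite hu'' ?W0 // hf' ?W0 // !GRing.addr0 GRing.mulr1.
  have -> : (ord0 == c) = false by apply/negbTE; apply/eqP => h; rewrite -h in c0.
  by move=> <-.
exists u; split; rewrite wc1 //; first exact: (subvP S'_L).
rewrite he b0 GRing.scale0r GRing.add0r GRing.opprD GRing.addrA GRing.subrr GRing.add0r.
by rewrite memvN.
Qed.

Lemma good_all w (c : 'I_n) : wt c = w -> 0 < c -> good c.
Proof.
elim/ltn_ind: w c => w IH c wc c0.
case: (boolP (isprod c)) => pc; last first.
  by apply: good1 => //; apply: Wgen => //; rewrite c0 ltn_ord.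
have cn : 0 < c < n by rewrite c0 ltn_ord.
have [/andP [f0 fn] /andP [g0 gn] wE] := Wprod cn pc.
pose p : 'I_n := Ordinal fn; pose q : 'I_n := Ordinal gn.
have wp := Wpos (t:=fl c) ltac:(by rewrite f0 fn).
have wq := Wpos (t:=gl c) ltac:(by rewrite g0 gn).
have [up [upL upF upD]] := IH (wt p) ltac:(rewrite -wc wE /=; lia) p erefl f0.
have [uq [uqL uqF uqD]] := IH (wt q) ltac:(rewrite -wc wE /=; lia) q erefl g0.
have tabc : tab p q = Some c.
  rewrite /tab.
  have -> : (p == ord0) = false by apply/negbTE; apply/eqP => /(congr1 val) /= h; lia.
  have -> : (q == ord0) = false by apply/negbTE; apply/eqP => /(congr1 val) /= h; lia.
  case: pickP => [t /andP[/andP[/andP[t0 pt] /eqP fi] /eqP gj]|].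
    congr Some; apply/val_inj => /=; apply: Winj => //; first by rewrite t0 ltn_ord.
  by move=> /(_ c); rewrite c0 pc !eqxx.
have ec : (('e_c)%R : V) = mulW ('e_p)%R ('e_q)%R by rewrite mulW_e tabc.
have wcE : wt c = wt p + wt q by rewrite wE.
exists (mulW up uq); split.
- by rewrite wcE; apply: Lv_mul => //; [exact: bilW | exact: unitW].
- by rewrite wcE; apply: Fv_mul.
have -> : (mulW up uq - ('e_c)%R = mulW (up - ('e_p)%R) uq + mulW ('e_p)%R (uq - ('e_q)%R))%R.
  by rewrite ec (mulBl bilW) (mulBr bilW) GRing.addrA GRing.subrK.
apply: memvD.
  by have := Fv_mul upD uqF; rewrite addSn wcE.
by have := Fv_mul (Fv_e p) uqD; rewrite addnS wcE.
Qed.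

Lemma gen_full : L_full mulW eW S W.
Proof.
apply/Lv_fullP.
suff H : forall d, d <= W.+1 -> forall v, v \in Fv (W.+1 - d) -> v \in LvS S W.
  apply/eqP; rewrite eqEsubv subvf /=; apply/subvP => v _.
  apply: (H W.+1) => //; rewrite subnn; apply/FvP => i; lia.
elim => [|d IH] hd v.
  rewrite subn0 => /FvP hv; rewrite [v]row_sum_delta; apply: memv_suml => i _.
  rewrite hv ?GRing.scale0r ?mem0v //; have := Wmax (ltn_ord i); lia.
move=> /FvP hv; rewrite [v]row_sum_delta; apply: memv_suml => i _.
have [hi|hi] := ltnP (wt i) (W.+1 - d.+1).
  by rewrite hv // GRing.scale0r mem0v.
apply: memvZ.
have [hi2|hi2] := ltnP (W.+1 - d.+1) (wt i).
  apply: IH; first lia.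
  apply: (subvP (Fv_mono (_ : W.+1 - d <= wt i))); first lia.
  exact: Fv_e.
case: (posnP i) => i0.
  have -> : i = ord0 by apply/val_inj.
  exact: memLv_e.
have [u [uL uF uD]] := good_all erefl i0.
have -> : (('e_i)%R = u - (u - ('e_i)%R))%R by rewrite GRing.opprB GRing.addrC GRing.subrK.
apply: memvB; first by apply: (subvP (Lv_mono _ _ _ _)) uL; have := Wmax (ltn_ord i); lia.
apply: IH; first lia.
by apply: (subvP (Fv_mono (_ : W.+1 - d <= (wt i).+1))) uD; lia.
Qed.

End AnyS.

Definition S0 : seq V := [seq ('e_i)%R | i : 'I_n <- enum 'I_n & (0 < i) && ~~ isprod i].

Lemma S0_basis_aux w (c : 'I_n) : wt c = w -> 0 < c -> (('e_c)%R : V) \in LvS S0 w.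
Proof.
elim/ltn_ind: w c => w IH c wc c0.
case: (boolP (isprod c)) => pc; last first.
  rewrite -wc (Wgen _ pc); last by rewrite c0 ltn_ord.
  apply: (@memLv_word _ _ mulW eW _ _ 1) => //; constructor.
  by apply: map_f; rewrite mem_filter c0 pc mem_enum.
have cn : 0 < c < n by rewrite c0 ltn_ord.
have [/andP [f0 fn] /andP [g0 gn] wE] := Wprod cn pc.
pose p : 'I_n := Ordinal fn; pose q : 'I_n := Ordinal gn.
have wp := Wpos (t:=fl c) ltac:(by rewrite f0 fn).
have wq := Wpos (t:=gl c) ltac:(by rewrite g0 gn).
have hp := IH (wt p) ltac:(rewrite -wc wE /=; lia) p erefl f0.
have hq := IH (wt q) ltac:(rewrite -wc wE /=; lia) q erefl g0.
have tabc : tab p q = Some c.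
  rewrite /tab.
  have -> : (p == ord0) = false by apply/negbTE; apply/eqP => /(congr1 val) /= h; lia.
  have -> : (q == ord0) = false by apply/negbTE; apply/eqP => /(congr1 val) /= h; lia.
  case: pickP => [t /andP[/andP[/andP[t0 pt] /eqP fi] /eqP gj]|].
    congr Some; apply/val_inj => /=; apply: Winj => //; first by rewrite t0 ltn_ord.
  by move=> /(_ c); rewrite c0 pc !eqxx.
have := Lv_mul bilW unitW hp hq; rewrite mulW_e tabc /=.
by rewrite -wc wE.
Qed.

Lemma S0_basis (c : 'I_n) : 0 < c -> (('e_c)%R : V) \in LvS S0 (wt c).
Proof. exact: S0_basis_aux. Qed.

Lemma S0_set_length : set_length mulW eW S0 W.
Proof.
split.
  apply/Lv_fullP.
  apply/eqP; rewrite eqEsubv subvf /=; apply/subvP => v _.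
  rewrite [v]row_sum_delta; apply: memv_suml => i _; apply: memvZ.
  case: (posnP i) => i0.
    have -> : i = ord0 by apply/val_inj.
    exact: memLv_e.
  by apply: (subvP (Lv_mono _ _ _ (Wmax (ltn_ord i)))); apply: S0_basis.
move=> k /Lv_fullP => hk.
have hw : forall j w, is_word mulW S0 j w -> hom j w.
  move=> j w; elim => [s|a b x y _ hx _ hy]; last exact: hom_mul.
  move=> /mapP [i]; rewrite mem_filter => /andP [/andP [i0 pi] _] ->.
  move=> t ht; rewrite ecoord; case: eqP => // ti; rewrite ti Wgen in ht => //.
  by rewrite i0 ltn_ord.
have hl : forall v, v \in LvS S0 k -> low k v.
  apply: span_ind.
  - by move=> i _; rewrite mxE.
  - by move=> a u u' hu hu' i hi; rewrite !mxE hu // hu' // GRing.mulr0 GRing.addr0.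
  move=> g /gensP [->|[j [hj /hw hg]]].
    move=> i hi; rewrite ecoord; case: eqP => // i0; rewrite i0 W0 in hi; lia.
  move=> i hi; apply: hg; lia.
have := hl (('e_(Ordinal topn))%R); rewrite hk memvf => /(_ isT (Ordinal topn)).
rewrite ecoord eqxx /= topW; case: leqP => // kW /(_ isT) /eqP.
by rewrite GRing.oner_eq0.
Qed.

Theorem wrealizable : realizable F n W.
Proof.
exists mulW, eW; split; first exact: bilW.
split; first exact: unitW.
split; first by exists S0; exact: S0_set_length.
move=> S l [hf hmin]; apply: hmin; apply: gen_full.
by exists l.
Qed.

End WAlg.

End M_WAlg.
Import M_WAlg.

Module M_Fam.

Section Fam.
Variable (F : fieldType).
Variables (L : nat) (js : seq nat).
Hypothesis L0 : 0 < L.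
Hypothesis jsL : all (fun j => j < L.-1) js.
Let p := size js.
Definition ysum u := \sum_(0 <= v < u) 2 ^ (nth 0 js v).
Definition fwt t := if t == 0 then 0 else if t <= L then 2 ^ t.-1
  else if t <= L + p then 2 ^ L.-1 + ysum (t - L) else 1.
Definition fisprod t := (2 <= t) && (t <= L + p).
Definition ffl t := t.-1.
Definition fgl t := if t <= L then t.-1 else (nth 0 js (t - L).-1).+1.

Lemma ysum0 : ysum 0 = 0. Proof. by rewrite /ysum big_geq. Qed.
Lemma ysumS u : ysum u.+1 = ysum u + 2 ^ (nth 0 js u).
Proof. by rewrite /ysum big_nat_recr. Qed.
Lemma ysum_mono a b : a <= b -> ysum a <= ysum b.
Proof. by move=> ab; rewrite /ysum (big_cat_nat (leq0n a) ab) leq_addr. Qed.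

Lemma fwtL u : u <= p -> fwt (L + u) = 2 ^ L.-1 + ysum u.
Proof.
move=> up; rewrite /fwt.
case: (posnP u) => [->|u0].
  rewrite addn0 ysum0 addn0; have -> : (L == 0) = false by lia.
  by rewrite leqnn.
have -> : (L + u == 0) = false by lia.
have -> : (L + u <= L) = false by lia.
have -> : (L + u <= L + p) = true by lia.
by have -> : L + u - L = u by lia.
Qed.

Lemma fwt_small t : 0 < t <= L -> fwt t = 2 ^ t.-1.
Proof.
move=> /andP [t0 tL]; rewrite /fwt.
have -> : (t == 0) = false by lia.
by rewrite tL.
Qed.

Lemma nth_js u : u < p -> nth 0 js u < L.-1.
Proof. by move=> up; apply: (allP jsL); apply: mem_nth. Qed.

Variable n' : nat.
Hypothesis Ln : L + p < n'.+1.

Lemma fam_realizable : realizable F n'.+1 (2 ^ L.-1 + \sum_(j <- js) 2 ^ j).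
Proof.
have -> : \sum_(j <- js) 2 ^ j = ysum p.
  by rewrite /ysum (big_nth 0).
apply: (@wrealizable F n' fwt fisprod ffl fgl) (L + p) _ _.
- by [].
- move=> t /andP [t0 tn]; rewrite /fwt.
  have -> : (t == 0) = false by lia.
  case: ifP => _; first exact: e2pos.
  case: ifP => _ //; have := e2pos L.-1; lia.
- move=> t /andP [t0 tn]; rewrite /fisprod negb_and -!ltnNge => h.
  rewrite /fwt; have -> : (t == 0) = false by lia.
  case/orP: h => h.
    have -> : t = 1 by lia.
    have -> : 1 <= L by lia.
    by [].
  have -> : (t <= L) = false by lia.
  by have -> : (t <= L + p) = false by lia.
- move=> t /andP [t0 tn] /andP [t2 tp]; rewrite /ffl /fgl.
  case: (leqP t L) => tL.
    split; [lia | lia |].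
    rewrite !fwt_small; [|lia|lia].
    have tE : t.-1 = (t.-1).-1.+1 by lia.
    rewrite [in LHS]tE e2S; lia.
  have [u tE] : exists u, t = L + u.+1 by exists (t - L - 1); lia.
  subst t.
  have up : u < p by lia.
  have hn := nth_js up.
  have e1 : (L + u.+1 - L).-1 = u by lia.
  have e2 : (L + u.+1).-1 = L + u by lia.
  rewrite e1 e2; split; [lia | lia |].
  rewrite !fwtL; [|lia|lia].
  rewrite ysumS fwt_small /=; lia.
- move=> t t' /andP [t0 tn] /andP [t0' tn'] /andP [t2 _] /andP [t2' _].
  rewrite /ffl => h _; lia.
- move=> t tn; rewrite /fwt.
  case: ifP => _; first lia.
  case: ifP => tL.
    have := e2le (_ : t.-1 <= L.-1); lia.
  case: ifP => tp.
    have := ysum_mono (_ : t - L <= p); lia.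
  have := e2pos L.-1; lia.
- exact: Ln.
- by rewrite fwtL.
Qed.

End Fam.

End M_Fam.
Import M_Fam.

Module M_Main.

Fixpoint Rl m c : seq nat :=
  if m is m'.+1 then
    Rl m' c ++ (if c is c'.+1 then map (addn (2 ^ m')) (Rl m' c') else [::])
  else [:: 0].

Lemma Rl_lt m c r : r \in Rl m c -> r < 2 ^ m.
Proof.
elim: m c r => [|m IH] c r /=; first by rewrite inE => /eqP ->.
rewrite mem_cat => /orP [/IH|]; first by rewrite e2S; lia.
case: c => // c /mapP [r' /IH hr ->]; rewrite e2S; lia.
Qed.

Lemma Rl_uniq m c : uniq (Rl m c).
Proof.
elim: m c => [|m IH] c //=.
rewrite cat_uniq IH /=; case: c => [|c] //=.
rewrite (map_inj_uniq (@addnI _)) IH andbT.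
apply/hasPn => x /mapP [r hr ->]; apply/negP => /Rl_lt; lia.
Qed.

Lemma Rl_rep m c r : r \in Rl m c ->
  exists js, [/\ size js <= c, all (fun j => j < m) js & r = \sum_(j <- js) 2 ^ j].
Proof.
elim: m c r => [|m IH] c r /=.
  by rewrite inE => /eqP ->; exists [::]; rewrite big_nil.
rewrite mem_cat => /orP [/IH [js [h1 /allP h2 h3]]|].
  by exists js; split => //; apply/allP => j /h2; lia.
case: c => // c /mapP [r' /IH [js [h1 /allP h2 h3]] ->].
exists (m :: js); split.
- by rewrite /=; lia.
- by rewrite /= ltnSn; apply/allP => j /h2; lia.
- by rewrite big_cons h3.
Qed.

Lemma Rl_size m c : size (Rl m c) = \sum_(0 <= i < c.+1) 'C(m, i).
Proof.
elim: m c => [|m IH] c /=.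
  rewrite big_ltn // bin0 big_nat_cond big1 // => i /andP [/andP [hi _] _].
  by rewrite bin0n; case: i hi.
rewrite size_cat IH; case: c => [|c].
  by rewrite addn0 !big_nat1 !bin0.
rewrite size_map IH.
rewrite [in RHS]big_nat_recl //.
rewrite [X in _ = _ + X](eq_bigr (fun i => 'C(m, i.+1) + 'C(m, i))); last by move=> i _; rewrite binS.
rewrite big_split /= [in LHS]big_nat_recl //.
have b0 : forall k, 'C(k, 0) = 1 by move=> k; case: k.
rewrite !b0; lia.
Qed.

Lemma binrep m r : r < 2 ^ m ->
  exists js, [/\ size js <= m, all (fun j => j < m) js & r = \sum_(j <- js) 2 ^ j].
Proof.
elim: m r => [|m IH] r.
  by rewrite expn0 ltnS leqn0 => /eqP ->; exists [::]; rewrite big_nil.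
rewrite e2S => hr.
have [lt|ge] := ltnP r (2 ^ m).
  have [js [h1 /allP h2 h3]] := IH r lt.
  exists js; split => //; first lia.
  by apply/allP => j /h2; lia.
have [js [h1 /allP h2 h3]] := IH (r - 2 ^ m) ltac:(lia).
exists (m :: js); split.
- by rewrite /=; lia.
- by rewrite /= ltnSn; apply/allP => j /h2; lia.
- by rewrite big_cons -h3; lia.
Qed.

Lemma real_js (F : fieldType) (n L : nat) (js : seq nat) :
  0 < L -> all (fun j => j < L.-1) js -> L + size js < n ->
  realizable F n (2 ^ L.-1 + \sum_(j <- js) 2 ^ j).
Proof.
case: n => [|n'] L0 hjs hn; first by [].
exact: fam_realizable.
Qed.


End M_Main.
Import M_Main.

Theorem proposition4p5 (F : fieldType) (n k : nat) (hk1 : (1 < k)%N) (hkn : (k < n)%N) :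
  (* (1) *)
  (exists s : seq nat,
      uniq s /\
      (forall l, l \in s -> (2 ^ (n - k - 1) <= l <= 2 ^ (n - k) - 1)%N /\ realizable F n l) /\
      (\sum_(0 <= i < (minn (k - 1) (n - k - 1)).+1) 'C(n - k - 1, i) <= size s)%N)
  /\
  (* (2) *)
  ((uphalf n < k)%N ->
     forall l, (2 ^ (n - k - 1) <= l <= 2 ^ (n - k) - 1)%N -> realizable F n l)
  /\
  (* (3) *)
  (k = 2%N ->
     exists s : seq nat,
       uniq s /\ size s = (1 + 'C(n - 3, 1))%N /\
       (forall l, l \in s <->
          ((2 ^ (n - k - 1) <= l <= 2 ^ (n - k) - 1)%N /\ realizable F n l))).
Proof.
have L0 : 0 < n - k by lia.
have eL : n - k - 1 = (n - k).-1 by lia.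
have pw : 2 ^ (n - k) = 2 * 2 ^ (n - k).-1 by rewrite -e2S; congr (expn 2 _); lia.
rewrite eL.
split; last split.
- exists (map (addn (2 ^ (n - k).-1)) (Rl (n - k).-1 k.-1)); split.
    by rewrite (map_inj_uniq (@addnI _)) Rl_uniq.
  split.
    move=> l /mapP [r hr ->]; have := Rl_lt hr => rlt.
    have [js [h1 h2 h3]] := Rl_rep hr.
    split; first by apply/andP; split; lia.
    by rewrite h3; apply: real_js => //; lia.
  rewrite size_map Rl_size.
  have hle : (minn (k - 1) (n - k).-1).+1 <= k.-1.+1 by lia.
  by rewrite (big_cat_nat (leq0n _) hle) /= leq_addr.
- move=> hk l /andP [l1 l2].
  have rlt : l - 2 ^ (n - k).-1 < 2 ^ (n - k).-1 by lia.
  have [js [h1 h2 h3]] := binrep rlt.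
  have -> : l = 2 ^ (n - k).-1 + \sum_(j <- js) 2 ^ j by lia.
  apply: real_js => //.
  move: hk; rewrite ltn_uphalf_double => hk; lia.
move=> k2; subst k.
exists (2 ^ (n - 2).-1 :: map (fun j => 2 ^ (n - 2).-1 + 2 ^ j) (iota 0 (n - 2).-1)).
split.
  rewrite /= map_inj_uniq ?iota_uniq ?andbT; last first.
    by move=> x y /addnI /(expnI (isT : 1 < 2)).
  apply/mapP => -[j _] /eqP; have := e2pos j; lia.
split.
  by rewrite /= size_map size_iota bin1; lia.
move=> l; split.
  rewrite inE => /orP [/eqP ->|/mapP [j hj ->]].
    split; first by apply/andP; split; lia.
    have := @real_js F n (n - 2) [::] L0 isT ltac:(rewrite /=; lia).
    by rewrite big_nil addn0.
  move: hj; rewrite mem_iota add0n => /andP [_ hj].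
  have := e2lt hj; rewrite -/(2 ^ _) => hj'.
  split; first by apply/andP; split; have := e2pos j; lia.
  have := @real_js F n (n - 2) [:: j] L0 ltac:(by rewrite /= hj) ltac:(rewrite /=; lia).
  by rewrite big_seq1.
move=> [/andP [l1 l2] [mul [e [hb [hu [[S hS] _]]]]]].
have n0 : 0 < n by lia.
have l0 : 0 < l by have := e2pos (n - 2).-1; lia.
have [_ hQ] := upper_len hb hu n0 hS l0.
have [h|h|[t [t0 tl tE]]] := hQ ltac:(lia).
- exfalso; lia.
- have -> : l = 2 ^ (n - 2).-1 by lia.
  exact: mem_head.
rewrite inE; apply/orP; right; apply/mapP.
exists t.-1; first by rewrite mem_iota; lia.
have : 2 ^ t = 2 * 2 ^ t.-1 by rewrite -e2S; congr (expn 2 _); lia.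
lia.
Qed.
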